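(* Let $G$ be a graph with at least one vertex and $f:V(G)\to\{1,2,3,\dots\}$. Then $2\gamma_{gr}(G)=\gamma_{gr}^{\times 2}(G_f)$.
   Context: Graphs are finite, simple, undirected; $N[v]$ is the closed neighborhood. $G_f$ is the graph with vertex set $\bigcup_{v\in V(G)}\{v^1,\dots,v^{f(v)+1}\}$ in which $v^iu^j$ is an edge iff either $v=u$ and $i\neq j$, or $vu\in E(G)$ (i.e., each $v$ is replaced by $f(v)+1$ pairwise true twins). A sequence $(v_1,\dots,v_k)$ of distinct vertices is legal if $N[v_i]\setminus\bigcup_{j<i}N[v_j]\neq\emptyset$ for every $i\ge2$, and a dominating sequence if moreover its vertex set is dominating; $\gamma_{gr}(G)$ is the maximum length of a dominating sequence. A sequence $(v_1,\dots,v_k)$ of distinct vertices is a double neighborhood sequence if for each $i$ some $u\in N[v_i]$ satisfies $|\{j<i:u\in N[v_j]\}|\le1$, and a double dominating sequence if moreover every vertex $w$ has $|N[w]\cap\{v_1,\dots,v_k\}|\ge 2$; for a graph without isolated vertices $\gamma_{gr}^{\times 2}$ is the maximum length of a double dominating sequence. *)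

(* Defs.v *)
(* Graphs: symmetric irreflexive boolean relations on a finType. *)
From mathcomp Require Import all_boot.
Set Implicit Arguments. Unset Strict Implicit. Unset Printing Implicit Defensive.

Section Defs.
Variables (T : finType) (e : rel T).

Definition cnbhd (v : T) : {set T} := [set u | (u == v) || e v u].

Definition legal_seq n (t : n.-tuple T) : bool :=
  uniq t &&
  [forall i : 'I_n,
     ~~ (cnbhd (tnth t i) \subset \bigcup_(j : 'I_n | j < i) cnbhd (tnth t j))].

Definition dominating_seq n (t : n.-tuple T) : bool :=
  legal_seq t && ([set: T] \subset \bigcup_(i : 'I_n) cnbhd (tnth t i)).

(* Grundy domination number: maximum length of a dominating sequence
   (distinct vertices, so length <= #|T|). *)
Definition gamma_gr : nat :=
  \max_(n < #|T|.+1 | [exists t : n.-tuple T, dominating_seq t]) n.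

Definition double_nbhd_seq n (t : n.-tuple T) : bool :=
  uniq t &&
  [forall i : 'I_n, [exists u in cnbhd (tnth t i),
     #|[set j : 'I_n | (j < i) && (u \in cnbhd (tnth t j))]| <= 1]].

Definition double_dominating_seq n (t : n.-tuple T) : bool :=
  double_nbhd_seq t &&
  [forall w : T, 2 <= #|cnbhd w :&: [set x | x \in t]|].

(* Grundy double domination number (meaningful for graphs without isolated
   vertices): maximum length of a double dominating sequence. *)
Definition gamma_gr2 : nat :=
  \max_(n < #|T|.+1 | [exists t : n.-tuple T, double_dominating_seq t]) n.

End Defs.

(* G_f: each vertex v replaced by f v + 1 pairwise adjacent true twins
   v^0, ..., v^(f v). *)
Definition blowup_vertex (T : finType) (f : T -> nat) := {v : T & 'I_(f v).+1}.

Definition blowup_rel (T : finType) (e : rel T) (f : T -> nat)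
  : rel (blowup_vertex f) :=
  fun a b => ((tag a == tag b) && (a != b)) || e (tag a) (tag b).
Arguments blowup_rel : clear implicits.

(* Main.v *)
Require Import Defs.
From mathcomp Require Import all_boot.
From mathcomp Require Import zify.
Set Implicit Arguments. Unset Strict Implicit. Unset Printing Implicit Defensive.

Lemma count_take_card (X : eqType) m (x : m.-tuple X) (P : pred X) i :
  count P (take i x) = #|[set j : 'I_m | (j < i) && P (tnth x j)]|.
Proof.
case: m x => [|m] x.
  rewrite tuple0 /=; apply/esym/eqP; rewrite cards_eq0; apply/eqP/setP => -[] //.
have x0 := tnth x ord0.
rewrite cardsE cardE /enum_mem size_filter -enumT.
have hi : minn i m.+1 <= size x by rewrite size_tuple geq_minr.
have -> : take i x = take (minn i m.+1) x.
  case: (leqP i m.+1) => h //.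
  by rewrite !take_oversize // size_tuple // ltnW.
rewrite -(map_nth_iota0 x0 hi) count_map.
have -> : count (fun j : 'I_m.+1 => (j < i) && P (tnth x j)) (enum 'I_m.+1)
   = count (fun j => (j < i) && P (nth x0 x j)) (map val (enum 'I_m.+1)).
  by rewrite count_map; apply: eq_count => j /=; rewrite (tnth_nth x0).
rewrite val_enum_ord.
have hk : minn i m.+1 <= m.+1 by rewrite geq_minr.
have -> : iota 0 m.+1 = iota 0 (minn i m.+1) ++ iota (0 + minn i m.+1) (m.+1 - minn i m.+1) by rewrite -iotaD subnKC.
rewrite count_cat add0n.
have -> : count (fun j => (j < i) && P (nth x0 x j)) (iota (minn i m.+1) (m.+1 - minn i m.+1)) = 0.
  apply/eqP; rewrite -leqn0 leqNgt -has_count; apply/hasPn => j.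
  rewrite mem_iota => /andP[h1 h2]; apply/negP => /andP [h3 _]; lia.
rewrite addn0; apply: eq_in_count => j; rewrite mem_iota => /andP[h1 h2].
have -> : j < i by lia.
by [].
Qed.

Section G.
Variables (T : finType) (e : rel T).
Notation N := (cnbhd e).

Inductive legalI : seq T -> Prop :=
| L0 : legalI [::]
| LS p v u : legalI p -> v \notin p -> u \in N v ->
    (forall w, w \in p -> u \notin N w) -> legalI (rcons p v).

Lemma legalI_uniq s : legalI s -> uniq s.
Proof. by elim=> //= p v u _ IH vp _ _; rewrite rcons_uniq vp IH. Qed.

Lemma legalI_nth x0 s : legalI s -> forall k, k < size s ->
  exists2 u, u \in N (nth x0 s k) & forall j, j < k -> u \notin N (nth x0 s j).
Proof.
elim=> // p v u _ IH vp uv hw k; rewrite size_rcons ltnS leq_eqVlt => /orP[/eqP->|kp].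
  exists u; first by rewrite nth_rcons ltnn eqxx.
  move=> j jp; rewrite nth_rcons jp; apply: hw; exact: mem_nth.
have [u' h1 h2] := IH k kp; exists u'; first by rewrite nth_rcons kp.
move=> j jk; rewrite nth_rcons (ltn_trans jk kp); exact: h2.
Qed.

Lemma legalI_legal s : legalI s -> legal_seq e (in_tuple s).
Proof.
move=> hs; rewrite /legal_seq (legalI_uniq hs) /=.
apply/forallP => i; have x0 : T := tnth (in_tuple s) i.
have [u h1 h2] := legalI_nth x0 hs (ltn_ord i).
apply/subsetPn; exists u; first by rewrite (tnth_nth x0).
apply/negP => /bigcupP [j ji]; rewrite (tnth_nth x0) /=; apply/negP; exact: h2.
Qed.

Lemma legalI_size s : legalI s -> size s <= #|T|.
Proof. by move=> /legalI_uniq /card_uniqP <-; exact: max_card. Qed.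

Lemma dom_le s : legalI s -> (forall w, has (fun v => w \in N v) s) -> size s <= gamma_gr e.
Proof.
move=> hs hd.
have hlt : size s < #|T|.+1 by rewrite ltnS legalI_size.
rewrite /gamma_gr.
apply: (@leq_bigmax_cond _ _ (fun n : 'I_#|T|.+1 => nat_of_ord n) (Ordinal hlt)).
apply/existsP; exists (in_tuple s).
rewrite /dominating_seq legalI_legal //=; apply/subsetP => w _.
have /hasP [v vs wv] := hd w.
have [i vi] : exists i, v = tnth (in_tuple s) i by apply/tnthP.
by apply/bigcupP; exists i => //; rewrite -vi.
Qed.

Lemma legalI_ext s w : legalI s -> ~~ has (fun v => w \in N v) s -> legalI (rcons s w).
Proof.
move=> hs hw; apply: (LS (u := w)) hs _ _ _.
- apply/negP => ws; apply: (negP hw); apply/hasP; exists w => //; by rewrite inE eqxx.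
- by rewrite inE eqxx.
- by move=> v vs; apply/negP => h; apply: (negP hw); apply/hasP; exists v.
Qed.

Lemma legalI_gamma s : legalI s -> size s <= gamma_gr e.
Proof.
move=> hs; have : #|T| - size s <= #|T| - size s by [].
move: {2}(#|T| - size s) => k; elim: k s hs => [|k IH] s hs hk;
 (case: (boolP [exists w, ~~ has (fun v => w \in N v) s]) => [/existsP [w hw] | /existsPn hn];
   last by apply: dom_le => // w; move: (hn w); rewrite negbK);
 have hs' := legalI_ext hs hw;
 have := legalI_size hs'; rewrite size_rcons => hsz.
  lia.
apply: leq_trans (leqnSn _) _; rewrite -(size_rcons s w); apply: IH => //.
rewrite size_rcons; lia.
Qed.

Definition touch u := fun w : T => u \in N w.

Lemma split_AB x0 t :
  (forall i, i < size t -> exists2 u, u \in N (nth x0 t i) & count (touch u) (take i t) <= 1) ->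
  exists A B, [/\ legalI A, legalI B & size A + size B = size t].
Proof.
move=> H.
suff [A [B [hA hB hsz _ _]]] : exists A B, [/\ legalI A, legalI B, size A + size B = size t,
   {subset A <= t} & forall u w, w \in B -> u \in N w -> 1 < count (touch u) t].
  by exists A, B.
elim/last_ind: t H => [|t v IH] H.
  by exists [::], [::]; split => //; constructor.
have H' : forall i, i < size t -> exists2 u, u \in N (nth x0 t i) & count (touch u) (take i t) <= 1.
  move=> i hi; have [|u h1 h2] := H i; first by rewrite size_rcons ltnS (ltnW hi).
  exists u; first by rewrite nth_rcons hi in h1.
  by rewrite -cats1 (takel_cat _ (ltnW hi)) in h2.
have [A [B [hA hB hsz sA hBinv]]] := IH H'.
have [|u hu hcu] := H (size t); first by rewrite size_rcons.
rewrite nth_rcons ltnn eqxx in hu.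
rewrite -cats1 takel_cat // take_size in hcu.
have cntr : forall u' , count (touch u') (rcons t v) = count (touch u') t + (u' \in N v).
  by move=> u'; rewrite -cats1 count_cat /= addn0.
case: (boolP [exists u', (u' \in N v) && (count (touch u') t == 0)]) => [/existsP [u' /andP [h1 /eqP h0]] | /existsPn hn].
- have nt : forall w, w \in t -> u' \notin N w.
    move=> w wt; apply/negP => h; have : has (touch u') t by apply/hasP; exists w.
    by rewrite has_count h0.
  exists (rcons A v), B; split => //.
  + refine (LS (u := u') hA _ h1 _).
      by apply/negP => /sA /nt; rewrite h1.
    by move=> w /sA; exact: nt.
  + by rewrite size_rcons size_rcons addSn hsz.
  + by move=> w; rewrite mem_rcons inE mem_rcons inE => /orP [->|/sA ->] //; rewrite orbT.
  + by move=> u0 w wB hw; rewrite cntr; apply: leq_trans (hBinv _ _ wB hw) (leq_addr _ _).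
- have nB : forall w, w \in B -> u \notin N w.
    by move=> w wB; apply/negP => /(hBinv _ _ wB); rewrite ltnNge hcu.
  exists A, (rcons B v); split => //.
  + refine (LS (u := u) hB _ hu nB).
    by apply/negP => /nB; rewrite hu.
  + by rewrite size_rcons size_rcons addnS hsz.
  + by move=> w wA; rewrite mem_rcons inE (sA _ wA) orbT.
  + move=> u0 w; rewrite mem_rcons inE => /orP [/eqP -> | wB] hw; rewrite cntr.
      move: (hn u0); rewrite hw /= addn1 ltnS lt0n; done.
    by apply: leq_trans (hBinv _ _ wB hw) (leq_addr _ _).
Qed.

End G.
Section B.
Variables (T : finType) (e : rel T) (e_sym : symmetric e) (f : T -> nat) (f_pos : forall v, 0 < f v).
Notation Tf := (blowup_vertex f).
Notation ef := (blowup_rel T e f).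

Lemma mem_cnbhd_blow (a b : Tf) : (b \in cnbhd ef a) = (tag b \in cnbhd e (tag a)).
Proof.
rewrite /cnbhd !inE /blowup_rel; case: (eqVneq b a) => [->|nba]; first by rewrite !eqxx.
by rewrite /= andbT (eq_sym (tag a)).
Qed.

Lemma cnbhd_sym (a b : T) : (a \in cnbhd e b) = (b \in cnbhd e a).
Proof. by rewrite !inE eq_sym e_sym. Qed.

Lemma half_lt n (i : 'I_(2 * n)) : i %/ 2 < n.
Proof. by rewrite ltn_divLR //; have := ltn_ord i; lia. Qed.

Definition hf n (i : 'I_(2 * n)) : 'I_n := Ordinal (half_lt i).

Definition F n (s : n.-tuple T) (i : 'I_(2 * n)) : Tf :=
  existT (fun v => 'I_(f v).+1) (tnth s (hf i)) (inord (i %% 2)).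

Lemma val_tagged_F n (s : n.-tuple T) i : val (tagged (F s i)) = i %% 2.
Proof.
rewrite /= inordK // ltnS; have := f_pos (tnth s (hf i)); have := ltn_pmod i (isT : 0 < 2); lia.
Qed.

Lemma blow_ge n (s : n.-tuple T) : dominating_seq e s -> 2 * n <= gamma_gr2 ef.
Proof.
case/andP => /andP [us /forallP hl] hdom.
pose x := [tuple F s i | i < 2 * n].
have ux : uniq x.
  apply/tuple_uniqP => i j; rewrite !tnth_mktuple => hij.
  have h1 : tnth s (hf i) = tnth s (hf j) := congr1 (@tag _ _) hij.
  have h2 : i %% 2 = j %% 2 by rewrite -(val_tagged_F s i) -(val_tagged_F s j) hij.
  move/tuple_uniqP: us => /(_ _ _ h1) /(congr1 val) /= h3.
  by apply: val_inj; rewrite /= (divn_eq i 2) (divn_eq j 2) h2 h3.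
have hlt : 2 * n < #|(Tf : finType)|.+1.
  by rewrite ltnS -{1}(size_tuple x) -(card_uniqP ux) max_card.
apply: (@leq_bigmax_cond _ _ (fun n : 'I_#|(Tf : finType)|.+1 => nat_of_ord n) (Ordinal hlt)).
apply/existsP; exists x; change (@double_dominating_seq _ ef (2 * n) x); apply/andP; split; first (apply/andP; split => //).
- apply/forallP => i.
  have /subsetPn [u hu hnu] := hl (hf i).
  apply/existsP; exists (existT (fun v => 'I_(f v).+1) u ord0).
  apply/andP; split; first by rewrite mem_cnbhd_blow tnth_mktuple.
  have sub : [set j : 'I_(2 * n) | (j < i) && (existT (fun v => 'I_(f v).+1) u ord0 \in cnbhd ef (tnth x j))]
       \subset [set j : 'I_(2 * n) | val j == (i %/ 2) * 2].
    apply/subsetP => j; rewrite inE => /andP [ji]; rewrite mem_cnbhd_blow tnth_mktuple /= => hj.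
    rewrite inE.
    have : ~~ (hf j < hf i).
      apply: contra hnu => lt; apply/bigcupP; exists (hf j) => //.
    rewrite /= -leqNgt => hle; apply/eqP; lia.
  apply: leq_trans (subset_leq_card sub) _.
  apply/card_le1_eqP => a b; rewrite !inE => /eqP ha /eqP hb; apply: val_inj; by rewrite ha hb.
- apply/forallP => w.
  have /bigcupP [j _ hj] := subsetP hdom (tag w) (in_setT _).
  have ha : 2 * j < 2 * n by have := ltn_ord j; lia.
  have hb : (2 * j).+1 < 2 * n by have := ltn_ord j; lia.
  have hfa : hf (Ordinal ha) = j by apply: val_inj => /=; lia.
  have hfb : hf (Ordinal hb) = j by apply: val_inj => /=; lia.
  have neq : tnth x (Ordinal ha) != tnth x (Ordinal hb).
    apply/negP => /eqP /(congr1 (fun a : Tf => val (tagged a))).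
    rewrite !tnth_mktuple !val_tagged_F /=; lia.
  have sub : [set tnth x (Ordinal ha); tnth x (Ordinal hb)] \subset cnbhd ef w :&: [set y | y \in x].
    apply/subsetP => y /set2P [] ->; rewrite in_setI mem_cnbhd_blow andbC inE mem_tnth /= tnth_mktuple /=.
      by rewrite hfa cnbhd_sym.
    by rewrite hfb cnbhd_sym.
  by apply: leq_trans (subset_leq_card sub); rewrite cards2 neq.
Qed.

Lemma blow_le (x0 : T) m (x : m.-tuple Tf) : double_nbhd_seq ef x -> m <= 2 * gamma_gr e.
Proof.
case/andP => _ /forallP hx.
pose t := map (@tag _ _) (x : seq Tf).
have ht : forall i, i < size t -> exists2 u, u \in cnbhd e (nth x0 t i) & count (touch e u) (take i t) <= 1.
  move=> i; rewrite size_map size_tuple => hi.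
  have /existsP [u' /andP [hu hc]] := hx (Ordinal hi).
  exists (tag u').
    rewrite mem_cnbhd_blow in hu.
    rewrite (nth_map (tnth x (Ordinal hi))) ?size_tuple //.
    by rewrite (tnth_nth (tnth x (Ordinal hi))) in hu.
  rewrite -map_take count_map count_take_card; apply: leq_trans hc.
  apply: eq_leq; apply: eq_card => j; rewrite [in RHS]inE mem_cnbhd_blow inE.
  by [].
have [A [B [hA hB hsz]]] := split_AB ht.
have := legalI_gamma hA; have := legalI_gamma hB.
rewrite /t size_map size_tuple in hsz; lia.
Qed.

End B.

Theorem proposition6 (T : finType) (e : rel T)
  (e_sym : symmetric e) (e_irr : irreflexive e) (T_ne : 0 < #|T|)
  (f : T -> nat) (f_pos : forall v, 0 < f v) :
  2 * gamma_gr e = gamma_gr2 (blowup_rel T e f).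
Proof.
have [x0 _] := card_gt0P T_ne.
apply/eqP; rewrite eqn_leq; apply/andP; split.
- rewrite /gamma_gr.
  apply: (big_ind (fun k => 2 * k <= gamma_gr2 (blowup_rel T e f))) => //.
    by move=> a b ha hb; lia.
  move=> i /existsP [s hs]. have h := blow_ge e_sym f_pos hs. exact h.
- apply/bigmax_leqP => i /existsP [x /andP [hx _]]; exact (blow_le x0 hx).
Qed.
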